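(* Let $i,j,n,r\ge0$ be integers and put $$R_1(\varepsilon)=\frac{(rn)!}{n!^r}\binom{rn+i+\varepsilon}{(r-1)n+j},$$ $$R_2(\varepsilon)=\frac{(rn)!}{n!^r}\frac{(1-\varepsilon)_{rn}}{(rn)!}\frac{(rn+j+1)!}{(1-\varepsilon)_{rn+j+1}}\binom{rn-\varepsilon+j-i}{j-i}\binom{(r+1)n-\varepsilon+1}{rn+i+1}.$$ Then for every integer $H\ge0$: if $0\le i,j\le n$, the number $d_n^H\frac1{H!}\frac{\partial^H}{\partial\varepsilon^H}R_1(\varepsilon)\big|_{\varepsilon=0}$ is an integer; and if $0\le i\le j\le n$, the number $d_n^H\frac1{H!}\frac{\partial^H}{\partial\varepsilon^H}R_2(\varepsilon)\big|_{\varepsilon=0}$ is an integer.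
   Context: $(x)_m=x(x+1)\cdots(x+m-1)$, $(x)_0=1$; for complex $x$ and integer $m$, $\binom xm=x(x-1)\cdots(x-m+1)/m!$ if $m\ge0$ and $\binom xm=0$ if $m<0$. $d_n=\operatorname{lcm}(1,\dots,n)$, $d_0=1$. *)

(* Defs.v *)
From Stdlib Require Import Reals ZArith Arith List.
From Coquelicot Require Import Coquelicot.
Open Scope R_scope.

Fixpoint falling (x : R) (m : nat) : R :=
  match m with O => 1 | S k => falling x k * (x - INR k) end.

Fixpoint poch (x : R) (m : nat) : R :=
  match m with O => 1 | S k => poch x k * (x + INR k) end.

Definition gbinom (x : R) (m : Z) : R :=
  match m with
  | Zneg _ => 0
  | _ => falling x (Z.to_nat m) / INR (fact (Z.to_nat m))
  end.

Definition dn (n : nat) : nat := fold_left Nat.lcm (seq 1 n) 1%nat.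

Definition RatR1 (i j n r : nat) (eps : R) : R :=
  INR (fact (r * n)) / INR (fact n) ^ r
  * gbinom (INR (r * n + i) + eps) ((Z.of_nat r - 1) * Z.of_nat n + Z.of_nat j)%Z.

Definition RatR2 (i j n r : nat) (eps : R) : R :=
  INR (fact (r * n)) / INR (fact n) ^ r
  * (poch (1 - eps) (r * n) / INR (fact (r * n)))
  * (INR (fact (r * n + j + 1)) / poch (1 - eps) (r * n + j + 1))
  * gbinom (INR (r * n) - eps + INR j - INR i) (Z.of_nat j - Z.of_nat i)%Z
  * gbinom (INR ((r + 1) * n) - eps + 1) (Z.of_nat (r * n + i + 1)).

(* Main.v *)
Require Import Defs.
From Stdlib Require Import Reals ZArith Arith List Lia Lra.
From Coquelicot Require Import Coquelicot.
From mathcomp Require ssreflect ssrnat div.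

Fixpoint gprod (c m D : nat) : nat :=
  match m with O => 1%nat | S m' => (gprod c m' D * div.gcdn (c - m') D)%nat end.

Module MC.
From mathcomp Require Import all_boot zify.
Local Open Scope nat_scope.

Lemma fact_eq k : fact k = k`!.
Proof. elim: k => // k IH; change (fact k.+1) with (k.+1 * fact k); by rewrite IH factS. Qed.

Lemma pow_eq a b : Nat.pow a b = a ^ b.
Proof. elim: b => // b IH; change (Nat.pow a b.+1) with (a * Nat.pow a b); by rewrite expnS IH. Qed.

Lemma dvd_from_logn X Y : 0 < X -> 0 < Y ->
  (forall p, prime p -> logn p X <= logn p Y) -> X %| Y.
Proof.
move=> X0 Y0 H; apply/dvdn_partP => // p; rewrite mem_primes => /andP[pp _].
by rewrite p_part pfactor_dvdn // H.
Qed.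

Lemma sum_ind_le L K : \sum_(1 <= s < K) (s <= L) <= L.
Proof.
suff H : forall K, \sum_(1 <= s < K.+1) (s <= L) = minn K L.
  by case: K => [|K]; [rewrite big_geq | rewrite H geq_minr].
elim=> [|K1 IH]; first by rewrite big_geq // minnE.
by rewrite big_nat_recr //= IH; case: (leqP K1.+1 L) => h; lia.
Qed.

Lemma rmul_div r N q : r * (N %/ q) <= (r * N) %/ q.
Proof.
case: q => [|q]; first by rewrite !divn0 muln0.
by rewrite leq_divRL // -mulnA leq_mul2l leq_divM orbT.
Qed.

Lemma superadd a b q : a %/ q + b %/ q <= (a + b) %/ q.
Proof.
case: q => [|q]; first by rewrite !divn0.
by rewrite divnD // leq_addr.
Qed.

Lemma dvd_divb q k : 0 < k -> (q %| k) <= k %/ q.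
Proof.
move=> k0; case: (boolP (q %| k)) => // h.
case: q h => [|q] h; first by rewrite dvd0n in h; move/eqP: h k0 => ->.
by rewrite divn_gt0 // dvdn_leq.
Qed.

Section Padic.
Variables (p n D : nat).
Hypothesis pp : prime p.
Hypothesis D0 : 0 < D.
Hypothesis HD : forall k, 0 < k -> k <= n -> k %| D.
Let e := trunc_log p n.

Lemma p0 : 0 < p. Proof. exact: prime_gt0. Qed.
Lemma p1 : 1 < p. Proof. exact: prime_gt1. Qed.

Lemma pdvdD s : s <= e -> p ^ s %| D.
Proof.
move=> se; case: s se => [|s] se; first by rewrite expn0 dvd1n.
have n0 : 0 < n.
  rewrite lt0n; apply/negP => /eqP n0; move: se; by rewrite /e n0 trunc_log0.
apply: HD; first by rewrite expn_gt0 p0.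
apply: leq_trans _ (trunc_logP p1 n0); exact: leq_pexp2l p0 se.
Qed.

Lemma ndiv0 s : e < s -> n %/ p ^ s = 0.
Proof.
move=> es; apply: divn_small; apply: leq_trans (trunc_log_ltn n p1) _.
exact: leq_pexp2l p0 es.
Qed.

Lemma lognF K N : N < K -> logn p N`! = \sum_(1 <= s < K) N %/ p ^ s.
Proof.
move=> NK; rewrite logn_fact // [RHS](big_cat_nat _ (n:=N.+1)) //=.
suff -> : \sum_(N.+1 <= s < K) N %/ p ^ s = 0 by rewrite addn0.
rewrite big_nat_cond big1 // => s /andP[/andP[Hs _] _].
rewrite divn_small //; apply: leq_trans Hs _; apply: ltnW; exact: ltn_expl p1.
Qed.

Lemma logn_gcd_lb k K : 0 < k ->
  \sum_(1 <= s < K) ((s <= e) * (p ^ s %| k)) <= logn p (gcdn k D).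
Proof.
move=> k0; apply: leq_trans _ (sum_ind_le (logn p (gcdn k D)) K).
apply: leq_sum => s _.
case: (boolP (s <= e)) => se; case: (boolP (p ^ s %| k)) => hk //=.
rewrite -pfactor_dvdn //; last by rewrite gcdn_gt0 k0.
by rewrite dvdn_gcd hk pdvdD.
Qed.

Lemma gprod_pos c m : 0 < gprod c m D.
Proof. elim: m => // m IH /=; by rewrite muln_gt0 IH gcdn_gt0 D0 orbT. Qed.

Lemma gprod_lb c m K : m <= c ->
  \sum_(1 <= s < K) ((s <= e) * (c %/ p ^ s - (c - m) %/ p ^ s)) <= logn p (gprod c m D).
Proof.
elim: m => [|m IH] mc.
  by rewrite big1 // => s _; rewrite subn0 subnn muln0.
change (gprod c m.+1 D) with (gprod c m D * gcdn (c - m) D).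
rewrite lognM ?gprod_pos ?gcdn_gt0 ?D0 ?orbT //.
have cm0 : 0 < c - m by lia.
apply: leq_trans _ (leq_add (IH (ltnW mc)) (logn_gcd_lb (c - m) K cm0)).
rewrite -big_split /=; apply: leq_sum => s _.
rewrite -mulnDr leq_mul2l; apply/orP; right.
have h1 := @dvd_divb (p ^ s) (c - m) cm0.
have h2 : (c - m) %/ p ^ s <= c %/ p ^ s by apply: leq_div2r; lia.
have h3 : c - m.+1 = (c - m).-1 by lia.
rewrite h3 divn_pred; lia.
Qed.

End Padic.

Lemma ineq1 (X R0 T C C0 : nat) : X <= R0 -> C0 + T <= C -> X + T <= R0 + (C - C0).
Proof. lia. Qed.

Lemma ineq2 (X R0 T1 T2 T3 C0 C1 C2 : nat) : X <= R0 -> R0 + T1 <= C1 -> T2 + C0 <= C2 ->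
  C0 <= C1 -> T3 <= C2 -> X + T1 + T2 <= T3 + (C2 - T3) + (C1 - C0).
Proof. lia. Qed.

Section Main.
Variables (n D : nat).
Hypothesis D0 : 0 < D.
Hypothesis HD : forall k, 0 < k -> k <= n -> k %| D.

Lemma E1 r m c : m <= r * n -> m <= c -> (n`!)^r * m`! %| (r*n)`! * gprod c m D.
Proof.
move=> mrn mc; apply: dvd_from_logn.
- by rewrite muln_gt0 expn_gt0 !fact_gt0.
- by rewrite muln_gt0 fact_gt0 gprod_pos.
move=> p pp.
set K := (r*n + n + c).+1.
rewrite lognM ?expn_gt0 ?fact_gt0 // lognX.
rewrite lognM ?fact_gt0 ?gprod_pos //.
rewrite (@lognF p pp K n) ?(@lognF p pp K m) ?(@lognF p pp K (r*n)); try lia.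
apply: leq_trans _ (leq_add (leqnn _) (@gprod_lb p n D pp D0 HD c m K mc)).
rewrite big_distrr -!big_split /=; apply: leq_sum => s _.
case: (leqP s (trunc_log p n)) => se /=.
- rewrite mul1n; apply: ineq1; first exact: rmul_div.
  by have := superadd (c - m) m (p^s); rewrite subnK.
- rewrite mul0n addn0 (@ndiv0 p n pp s se) muln0 add0n. exact: leq_div2r.
Qed.


Lemma E2 r i j : i <= j -> j <= n -> n <= r * n + j ->
  (n`!)^r * (j-i)`! * (r*n+i+1)`! %|
  (r*n+j+1)`! * gprod ((r+1)*n+1) (n-j) D * gprod (r*n+j-i) (r*n+j-n) D.
Proof.
move=> ij jn nrj; apply: dvd_from_logn.
- by rewrite !muln_gt0 expn_gt0 !fact_gt0.
- by rewrite !muln_gt0 fact_gt0 !gprod_pos.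
move=> p pp.
set K := ((r+1)*n + n + j + 2).
rewrite !lognM ?muln_gt0 ?expn_gt0 ?fact_gt0 ?gprod_pos // lognX.
rewrite (@lognF p pp K n) ?(@lognF p pp K (j-i)) ?(@lognF p pp K (r*n+i+1))
  ?(@lognF p pp K (r*n+j+1)); try lia.
have m1 : n - j <= (r+1)*n+1 by lia.
have m2 : r*n+j-n <= r*n+j-i by lia.
apply: leq_trans _ (leq_add (leq_add (leqnn _) (@gprod_lb p n D pp D0 HD _ _ K m1))
   (@gprod_lb p n D pp D0 HD _ _ K m2)).
rewrite big_distrr -!big_split /=; apply: leq_sum => s _.
have -> : (r + 1) * n + 1 - (n - j) = r*n+j+1 by lia.
have -> : r * n + j - i - (r * n + j - n) = n - i by lia.
case: (leqP s (trunc_log p n)) => se /=.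
- rewrite !mul1n; apply: ineq2.
  + exact: rmul_div.
  + by have := superadd (r*n) (j-i) (p^s); rewrite (_ : r*n + (j-i) = r*n+j-i) //; lia.
  + by have := superadd (r*n+i+1) (n-i) (p^s); rewrite (_ : r*n+i+1 + (n-i) = (r+1)*n+1) //; lia.
  + apply: leq_div2r; lia.
  + apply: leq_div2r; lia.
- rewrite !mul0n !addn0 (@ndiv0 p n pp s se) muln0 add0n.
  by have := superadd (j-i) (r*n+i+1) (p^s); rewrite (_ : j-i + (r*n+i+1) = r*n+j+1) //; lia.
Qed.

Lemma E3 L c : L <= n -> L <= c -> L`! %| gprod c L D.
Proof.
move=> Ln Lc; apply: dvd_from_logn; rewrite ?fact_gt0 ?gprod_pos //.
move=> p pp; set K := (n + c).+1.
rewrite (@lognF p pp K L); last by lia.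
apply: leq_trans _ (@gprod_lb p n D pp D0 HD _ _ K Lc).
apply: leq_sum => s _.
case: (leqP s (trunc_log p n)) => se /=.
- rewrite mul1n leq_subRL; last by apply: leq_div2r; lia.
  by have := superadd (c - L) L (p^s); rewrite subnK.
- rewrite mul0n; have := @ndiv0 p n pp s se; have : L %/ p ^ s <= n %/ p ^ s by apply: leq_div2r.
  lia.
Qed.

End Main.

Lemma natdiv_of (X Y : nat) : X %| Y -> Nat.divide X Y.
Proof. by case/dvdnP => z Hz; exists z. Qed.

Lemma HD_conv n D : (forall k, lt 0 k -> le k n -> Nat.divide k D) ->
  forall k, 0 < k -> k <= n -> k %| D.
Proof. move=> HD k /ltP k0 /leP kn; case: (HD k k0 kn) => z ->; exact: dvdn_mull. Qed.

Lemma E1s n D r m c : lt 0 D -> (forall k, lt 0 k -> le k n -> Nat.divide k D) ->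
  le m (r * n) -> le m c ->
  Nat.divide (Nat.pow (fact n) r * fact m) (fact (r * n) * gprod c m D).
Proof.
move=> /ltP D0 /HD_conv HD /leP h1 /leP h2; rewrite !fact_eq pow_eq.
exact/natdiv_of/E1.
Qed.

Lemma E2s n D r i j : lt 0 D -> (forall k, lt 0 k -> le k n -> Nat.divide k D) ->
  le i j -> le j n -> le n (r * n + j) ->
  Nat.divide (Nat.pow (fact n) r * fact (j-i) * fact (r*n+i+1))
  (fact (r*n+j+1) * gprod ((r+1)*n+1) (n-j) D * gprod (r*n+j-i) (r*n+j-n) D).
Proof.
move=> /ltP D0 /HD_conv HD /leP h1 /leP h2 /leP h3; rewrite !fact_eq pow_eq.
exact/natdiv_of/E2.
Qed.

Lemma E3s n D L c : lt 0 D -> (forall k, lt 0 k -> le k n -> Nat.divide k D) ->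
  le L n -> le L c -> Nat.divide (fact L) (gprod c L D).
Proof.
move=> /ltP D0 /HD_conv HD /leP h1 /leP h2; rewrite fact_eq.
apply: natdiv_of; exact: (@E3 n D D0 HD L c h1 h2).
Qed.

Lemma gcd_l k D : Nat.divide (gcdn k D) k.
Proof. apply: natdiv_of; exact: dvdn_gcdl. Qed.
Lemma gcd_r k D : Nat.divide (gcdn k D) D.
Proof. apply: natdiv_of; exact: dvdn_gcdr. Qed.

End MC.

Lemma E1' n D r m c : (0 < D)%nat -> (forall k, (0 < k)%nat -> (k <= n)%nat -> Nat.divide k D) ->
  (m <= r * n)%nat -> (m <= c)%nat ->
  Nat.divide (fact n ^ r * fact m)%nat (fact (r * n) * gprod c m D)%nat.
Proof. exact (@MC.E1s n D r m c). Qed.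

Lemma E2' n D r i j : (0 < D)%nat -> (forall k, (0 < k)%nat -> (k <= n)%nat -> Nat.divide k D) ->
  (i <= j)%nat -> (j <= n)%nat -> (n <= r * n + j)%nat ->
  Nat.divide (fact n ^ r * fact (j-i) * fact (r*n+i+1))%nat
  (fact (r*n+j+1) * gprod ((r+1)*n+1) (n-j) D * gprod (r*n+j-i) (r*n+j-n) D)%nat.
Proof. exact (@MC.E2s n D r i j). Qed.

Lemma E3' n D L c : (0 < D)%nat -> (forall k, (0 < k)%nat -> (k <= n)%nat -> Nat.divide k D) ->
  (L <= n)%nat -> (L <= c)%nat -> Nat.divide (fact L) (gprod c L D).
Proof. exact (@MC.E3s n D L c). Qed.

Lemma gcd_l k D : Nat.divide (div.gcdn k D) k.
Proof. exact (MC.gcd_l k D). Qed.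
Lemma gcd_r k D : Nat.divide (div.gcdn k D) D.
Proof. exact (MC.gcd_r k D). Qed.


Open Scope R_scope.
Open Scope R_scope.

Definition Ser (f : R -> R) (a : nat -> R) : Prop :=
  exists rho, 0 < rho /\ CV_disk a rho /\ forall x, Rabs x < rho -> f x = PSeries a x.
Definition Wt (d g : R) (a : nat -> R) : Prop :=
  forall H, exists z : Z, d ^ H * a H = g * IZR z.
Definition Good d f g := exists a, Ser f a /\ Wt d g a.

Lemma CV_disk_radius a rho : CV_disk a rho -> Rbar_le rho (CV_radius a).
Proof.
  intros H; unfold CV_radius; destruct (Lub_Rbar_correct (CV_disk a)) as [Hub _].
  apply Hub; exact H.
Qed.

Lemma CV_disk_abs a rho : CV_disk a rho -> CV_disk (fun n => Rabs (a n)) rho.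
Proof.
  unfold CV_disk; intros H; apply ex_series_ext with (2 := H).
  intros k; rewrite Rabs_mult, Rabs_mult, Rabs_Rabsolu; reflexivity.
Qed.

Lemma sum_int (F : nat -> R) c N :
  (forall k, (k <= N)%nat -> exists z, F k = c * IZR z) -> exists z, sum_f_R0 F N = c * IZR z.
Proof.
  induction N as [|N IH]; intros HF.
  - destruct (HF 0%nat (le_n 0)) as [z Hz]; exists z; simpl; exact Hz.
  - destruct IH as [z1 Hz1]. { intros k Hk; apply HF; lia. }
    destruct (HF (S N) (le_n _)) as [z2 Hz2].
    exists (z1 + z2)%Z; simpl; rewrite Hz1, Hz2, plus_IZR; ring.
Qed.

Lemma Good_mult d f g g1 g2 : Good d f g1 -> Good d g g2 ->
  Good d (fun x => f x * g x) (g1 * g2).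
Proof.
  intros [a [[r1 [Hr1 [Ca Ea]]] Wa]] [b [[r2 [Hr2 [Cb Eb]]] Wb]].
  exists (PS_mult a b); split.
  - set (rho := Rmin r1 r2 / 2).
    assert (Hm1 := Rmin_l r1 r2); assert (Hm2 := Rmin_r r1 r2).
    assert (Hmp : 0 < Rmin r1 r2) by (apply Rmin_pos; lra).
    assert (Hrho : 0 < rho) by (unfold rho; lra).
    assert (La : forall y, Rabs y < Rmin r1 r2 -> Rbar_lt (Rabs y) (CV_radius a)).
    { intros y Hy; apply Rbar_lt_le_trans with (Finite r1); [simpl; lra|].
      apply CV_disk_radius; exact Ca. }
    assert (Lb : forall y, Rabs y < Rmin r1 r2 -> Rbar_lt (Rabs y) (CV_radius b)).
    { intros y Hy; apply Rbar_lt_le_trans with (Finite r2); [simpl; lra|].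
      apply CV_disk_radius; exact Cb. }
    assert (La' : Rbar_lt (Rabs rho) (CV_radius (fun n => Rabs (a n)))).
    { apply Rbar_lt_le_trans with (Finite r1); [simpl; rewrite Rabs_pos_eq; unfold rho; lra|].
      apply CV_disk_radius, CV_disk_abs; exact Ca. }
    assert (Lb' : Rbar_lt (Rabs rho) (CV_radius (fun n => Rabs (b n)))).
    { apply Rbar_lt_le_trans with (Finite r2); [simpl; rewrite Rabs_pos_eq; unfold rho; lra|].
      apply CV_disk_radius, CV_disk_abs; exact Cb. }
    exists rho; split; [exact Hrho|split].
    + unfold CV_disk.
      apply (@ex_series_le R_AbsRing R_CompleteNormedModule) with (b := fun n => PS_mult (fun n => Rabs (a n)) (fun n => Rabs (b n)) n * rho ^ n).
      * intros k; change norm with Rabs; simpl.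
        rewrite Rabs_Rabsolu, Rabs_mult, (Rabs_pos_eq (rho ^ k)) by (apply pow_le; lra).
        apply Rmult_le_compat_r; [apply pow_le; lra|].
        unfold PS_mult; eapply Rle_trans; [apply sum_f_R0_triangle|].
        right; apply sum_eq; intros t _; rewrite Rabs_mult; reflexivity.
      * pose proof (ex_pseries_mult _ _ _ La' Lb') as Hex.
        unfold ex_pseries in Hex; apply ex_series_ext with (2 := Hex).
        intros k; rewrite pow_n_pow; unfold scal; simpl; unfold mult; simpl; ring.
    + intros x Hx; rewrite Ea, Eb by (unfold rho in Hx; lra).
      rewrite PSeries_mult; [reflexivity| |]; [apply La|apply Lb]; unfold rho in Hx; lra.
  - intros H.
    unfold PS_mult; rewrite scal_sum.
    apply sum_int; intros k Hk.
    destruct (Wa k) as [z1 Hz1]; destruct (Wb (H - k)%nat) as [z2 Hz2].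
    exists (z1 * z2)%Z; rewrite mult_IZR.
    replace (d ^ H) with (d ^ k * d ^ (H - k)) by (rewrite <- pow_add; f_equal; lia).
    transitivity ((d ^ k * a k) * (d ^ (H - k) * b (H - k)%nat)); [ring|].
    rewrite Hz1, Hz2; ring.
Qed.

Lemma Good_ext d f h g : Good d f g ->
  (exists delta, 0 < delta /\ forall x, Rabs x < delta -> f x = h x) -> Good d h g.
Proof.
  intros [a [[r [Hr [C E]]] W]] [de [Hde Hfh]].
  exists a; split; [|exact W].
  exists (Rmin r de); split; [apply Rmin_pos; lra|split].
  - apply CV_disk_le with r; [|exact C].
    assert (Hm := Rmin_l r de); assert (0 < Rmin r de) by (apply Rmin_pos; lra).
    rewrite (Rabs_pos_eq (Rmin r de)), (Rabs_pos_eq r); lra.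
  - intros x Hx; assert (Hm := Rmin_l r de); assert (Hm' := Rmin_r r de).
    rewrite <- Hfh by lra; apply E; lra.
Qed.

Lemma Good_scal d f g c : Good d f g -> Good d (fun x => c * f x) (c * g).
Proof.
  intros [a [[r [Hr [C E]]] W]].
  exists (PS_scal c a); split.
  - exists r; split; [exact Hr|split].
    + apply CV_disk_scal; exact C.
    + intros x Hx; rewrite PSeries_scal, E by exact Hx; reflexivity.
  - intros H; destruct (W H) as [z Hz]; exists z.
    unfold PS_scal, scal; simpl; unfold mult; simpl.
    transitivity (c * (d ^ H * a H)); [ring|]; rewrite Hz; ring.
Qed.

Lemma Good_weaken d f g g' w : Good d f g -> g = g' * IZR w -> Good d f g'.
Proof.
  intros [a [S W]] Hg; exists a; split; [exact S|].
  intros H; destruct (W H) as [z Hz]; exists (w * z)%Z.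
  rewrite Hz, Hg, mult_IZR; ring.
Qed.

Lemma series_fin (u : nat -> R) N : (forall k, (N < k)%nat -> u k = 0) ->
  is_series u (sum_f_R0 u N).
Proof.
  intros Hu; apply is_series_Reals; intros eps Heps; exists N; intros m Hm.
  assert (E : sum_f_R0 u m = sum_f_R0 u N).
  { induction Hm as [|m Hm IH]; [reflexivity|].
    simpl; rewrite IH, Hu by lia; ring. }
  unfold R_dist; rewrite E, Rminus_diag, Rabs_R0; exact Heps.
Qed.

Definition linseq (c s : R) (t : nat) : R :=
  match t with O => c | 1%nat => s | _ => 0 end.

Lemma Good_lin D k s : (s = 1 \/ s = -1)%Z ->
  Good (INR D) (fun x => INR k + IZR s * x) (INR (div.gcdn k D)).
Proof.
  intros Hs; exists (linseq (INR k) (IZR s)); split.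
  - exists 1; split; [lra|split].
    + unfold CV_disk; eexists; apply series_fin with (N := 1%nat).
      intros t Ht; destruct t as [|[|t]]; try lia; simpl; rewrite Rmult_0_l; apply Rabs_R0.
    + intros x _; unfold PSeries; symmetry; apply is_series_unique.
      replace (INR k + IZR s * x) with (sum_f_R0 (fun t => linseq (INR k) (IZR s) t * x ^ t) 1)
        by (simpl; ring).
      apply series_fin; intros t Ht; destruct t as [|[|t]]; try lia; simpl; ring.
  - intros H; destruct H as [|[|H]].
    + destruct (gcd_l k D) as [z Hz]; exists (Z.of_nat z); simpl.
      rewrite <- INR_IZR_INZ; rewrite Hz at 1; rewrite mult_INR; ring.
    + destruct (gcd_r k D) as [z Hz]; exists (s * Z.of_nat z)%Z; simpl.
      rewrite mult_IZR, <- INR_IZR_INZ; rewrite Hz at 1; rewrite mult_INR; ring.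
    + exists 0%Z; simpl; ring.
Qed.

Lemma Good_geom D b : (0 < b)%nat -> Nat.divide b D ->
  Good (INR D) (fun x => / (INR b - x)) (/ INR b).
Proof.
  intros Hb [w Hw].
  assert (Bp : 1 <= INR b) by (apply (le_INR 1); lia).
  exists (fun t => (/ INR b) ^ (S t)); split.
  - exists (1/2); split; [lra|split].
    + unfold CV_disk.
      assert (Hq : Rabs (/ (2 * INR b)) < 1).
      { rewrite Rabs_pos_eq by (apply Rlt_le, Rinv_0_lt_compat; lra).
        apply (Rmult_lt_reg_l (2 * INR b)); [lra|]. rewrite Rinv_r by lra. lra. }
      eexists; apply is_series_ext with (2 := is_series_scal_l (/ INR b) _ _ (is_series_geom _ Hq)).
      intros t.
      rewrite (Rabs_pos_eq ((/ INR b) ^ S t * (1/2) ^ t))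
        by (apply Rmult_le_pos; apply pow_le; [apply Rlt_le, Rinv_0_lt_compat; lra | lra]).
      unfold scal; simpl; unfold mult; simpl.
      match goal with |- ?A = ?B => change (@eq R A B) end.
      rewrite Rinv_mult, Rpow_mult_distr; unfold Rdiv; rewrite Rmult_1_l; ring.
    + intros x Hx; unfold PSeries; symmetry; apply is_series_unique.
      assert (Hq : Rabs (x / INR b) < 1).
      { unfold Rdiv; rewrite Rabs_mult, (Rabs_pos_eq (/ INR b)) by (apply Rlt_le, Rinv_0_lt_compat; lra).
        apply (Rmult_lt_reg_r (INR b)); [lra|]. rewrite Rmult_assoc, Rinv_l by lra. lra. }
      assert (Hx' : Rabs x < INR b) by lra.
      apply Rabs_def2 in Hx'.
      replace (/ (INR b - x)) with (scal (/ INR b) (/ (1 - x / INR b))) by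
        (unfold scal; simpl; unfold mult; simpl; field; split; lra).
      apply is_series_ext with (2 := is_series_scal_l (/ INR b) _ _ (is_series_geom _ Hq)).
      intros t; unfold scal; simpl; unfold mult; simpl.
      match goal with |- ?A = ?B => change (@eq R A B) end.
      unfold Rdiv; rewrite Rpow_mult_distr; simpl; ring.
  - intros H; exists (Z.of_nat (w ^ H)); rewrite <- INR_IZR_INZ, pow_INR, Hw, mult_INR.
    rewrite Rpow_mult_distr; simpl.
    transitivity (/ INR b * INR w ^ H * (INR b ^ H * (/ INR b) ^ H)); [ring|].
    rewrite <- Rpow_mult_distr, Rinv_r, pow1 by lra; ring.
Qed.

Lemma ball0 (e : R) y : ball (0:R) e y -> Rabs y < e.
Proof.
  intros Hy; change (Rabs (y + - 0) < e) in Hy. rewrite Ropp_0, Rplus_0_r in Hy; exact Hy.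
Qed.

Lemma Good_final D f w : Good (INR D) f (IZR w) ->
  forall H, exists z, INR D ^ H * / INR (fact H) * Derive_n f H 0 = IZR z.
Proof.
  intros [a [[r [Hr [C E]]] W]] H.
  assert (Hr' : Rbar_lt 0 (CV_radius a)).
  { apply Rbar_lt_le_trans with (Finite r); [simpl; lra|]. apply CV_disk_radius; exact C. }
  rewrite (Derive_n_ext_loc f (PSeries a)).
  - rewrite Derive_n_coef by exact Hr'.
    destruct (W H) as [z Hz]; exists (w * z)%Z; rewrite mult_IZR, <- Hz.
    field; apply INR_fact_neq_0.
  - exists (mkposreal r Hr); intros y Hy; apply E; apply ball0 in Hy; exact Hy.
Qed.
Open Scope R_scope.

Lemma Good_one d : Good d (fun _ => 1) 1.
Proof.
  exists (linseq 1 0); split.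
  - exists 1; split; [lra|split].
    + unfold CV_disk; eexists; apply series_fin with (N := 1%nat).
      intros t Ht; destruct t as [|[|t]]; try lia; simpl; rewrite Rmult_0_l; apply Rabs_R0.
    + intros x _; unfold PSeries; symmetry; apply is_series_unique.
      replace 1 with (sum_f_R0 (fun t => linseq 1 0 t * x ^ t) 1) at 1 by (simpl; ring).
      apply series_fin; intros t Ht; destruct t as [|[|t]]; try lia; simpl; ring.
  - intros H; exists (match H with O => 1%Z | _ => 0%Z end).
    destruct H as [|[|H]]; simpl; ring.
Qed.

Lemma Good_eqw d f g g' : Good d f g -> g = g' -> Good d f g'.
Proof. intros G ->; exact G. Qed.

Lemma Good_ext_all d f h g : Good d f g -> (forall x, f x = h x) -> Good d h g.
Proof. intros G E; apply Good_ext with f; [exact G|]. exists 1; split; [lra|]. intros; apply E. Qed.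

Lemma Good_falling D c s m : (s = 1 \/ s = -1)%Z -> (m <= c)%nat ->
  Good (INR D) (fun x => falling (INR c + IZR s * x) m) (INR (gprod c m D)).
Proof.
  intros Hs; induction m as [|m IH]; intros Hm.
  - simpl; apply Good_one.
  - apply Good_eqw with (INR (gprod c m D) * INR (div.gcdn (c - m) D)).
    + apply Good_ext_all with (fun x => falling (INR c + IZR s * x) m * (INR (c - m) + IZR s * x)).
      * apply Good_mult; [apply IH; lia|apply Good_lin; exact Hs].
      * intros x; simpl; rewrite minus_INR by lia; ring.
    + simpl; rewrite mult_INR; reflexivity.
Qed.

Lemma Good_rfalling D n c m : (0 < D)%nat -> (forall k, (0 < k)%nat -> (k <= n)%nat -> Nat.divide k D) ->
  (m <= c)%nat -> (c <= n)%nat ->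
  Good (INR D) (fun x => / falling (INR c - x) m) (/ falling (INR c) m).
Proof.
  intros D0 HD; induction m as [|m IH]; intros Hm Hc.
  - simpl; apply Good_eqw with 1; [|field].
    apply Good_ext_all with (fun _ => 1); [apply Good_one|intros; field].
  - apply Good_eqw with (/ falling (INR c) m * / INR (c - m)).
    + apply Good_ext_all with (fun x => / falling (INR c - x) m * / (INR (c - m) - x)).
      * apply Good_mult; [apply IH; lia|apply Good_geom; [lia|apply HD; lia]].
      * intros x; simpl; rewrite minus_INR by lia; rewrite Rinv_mult; f_equal; f_equal; ring.
    + simpl; rewrite minus_INR by lia; rewrite Rinv_mult; reflexivity.
Qed.

Lemma falling_add y a b : falling y (a + b) = falling y a * falling (y - INR a) b.
Proof.
  induction b as [|b IH].
  - rewrite Nat.add_0_r; simpl; ring.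
  - rewrite Nat.add_succ_r; simpl; rewrite IH, plus_INR; ring.
Qed.

Lemma poch_add y a b : poch y (a + b) = poch y a * poch (y + INR a) b.
Proof.
  induction b as [|b IH].
  - rewrite Nat.add_0_r; simpl; ring.
  - rewrite Nat.add_succ_r; simpl; rewrite IH, plus_INR; ring.
Qed.

Lemma falling_S' z k : falling z (S k) = z * falling (z - 1) k.
Proof. change (S k) with (1 + k)%nat; rewrite falling_add; simpl; ring. Qed.

Lemma poch_falling y m : poch y m = falling (y + INR m - 1) m.
Proof.
  induction m as [|m IH]; [reflexivity|].
  rewrite falling_S'.
  change (poch y (S m)) with (poch y m * (y + INR m)); rewrite IH, S_INR.
  replace (y + (INR m + 1) - 1 - 1) with (y + INR m - 1) by ring.
  replace (y + (INR m + 1) - 1) with (y + INR m) by ring.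
  ring.
Qed.

Lemma poch_pos y m : 0 < y -> 0 < poch y m.
Proof.
  intros Hy; induction m as [|m IH]; simpl; [lra|].
  apply Rmult_lt_0_compat; [exact IH|]. assert (0 <= INR m) by apply pos_INR; lra.
Qed.

Lemma falling_pos y m : INR m - 1 < y -> 0 < falling y m.
Proof.
  induction m as [|m IH]; intros Hy; simpl; [lra|].
  rewrite S_INR in Hy; apply Rmult_lt_0_compat; [apply IH; lra|lra].
Qed.

Lemma falling_fact c m : (m <= c)%nat -> falling (INR c) m * INR (fact (c - m)) = INR (fact c).
Proof.
  induction m as [|m IH]; intros Hm.
  - rewrite Nat.sub_0_r; simpl; ring.
  - rewrite <- IH by lia.
    replace (c - m)%nat with (S (c - S m)) by lia.
    change (fact (S (c - S m))) with (S (c - S m) * fact (c - S m))%nat.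
    rewrite mult_INR, S_INR, minus_INR, (S_INR m) by lia. simpl falling. ring.
Qed.

Lemma gbinom_nat y k : gbinom y (Z.of_nat k) = falling y k / INR (fact k).
Proof.
  destruct k as [|k]; [reflexivity|].
  unfold gbinom. simpl (Z.of_nat (S k)).
  change (Z.to_nat (Z.pos (Pos.of_succ_nat k))) with (Z.to_nat (Z.of_nat (S k))).
  rewrite Nat2Z.id; reflexivity.
Qed.

Lemma gbinom_neg y z : (z < 0)%Z -> gbinom y z = 0.
Proof. intros Hz; destruct z; [lia|lia|reflexivity]. Qed.

Lemma fold_lcm_div l a : Nat.divide a (fold_left Nat.lcm l a) /\
  forall x, In x l -> Nat.divide x (fold_left Nat.lcm l a).
Proof.
  revert a; induction l as [|y l IH]; intros a; simpl.
  - split; [apply Nat.divide_refl|intros x []].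
  - destruct (IH (Nat.lcm a y)) as [H1 H2]; split.
    + eapply Nat.divide_trans; [apply Nat.divide_lcm_l|exact H1].
    + intros x [<-|Hx]; [|apply H2; exact Hx].
      eapply Nat.divide_trans; [apply Nat.divide_lcm_r|exact H1].
Qed.

Lemma fold_lcm_pos l a : a <> 0%nat -> (forall x, In x l -> x <> 0%nat) -> fold_left Nat.lcm l a <> 0%nat.
Proof.
  revert a; induction l as [|y l IH]; intros a Ha Hl; simpl; [exact Ha|].
  apply IH; [|intros x Hx; apply Hl; right; exact Hx].
  intros E; apply Nat.lcm_eq_0 in E; destruct E as [E|E]; [exact (Ha E)|].
  apply (Hl y); [left; reflexivity|exact E].
Qed.

Lemma dn_pos n : (0 < dn n)%nat.
Proof.
  unfold dn; apply Nat.neq_0_lt_0, fold_lcm_pos; [lia|].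
  intros x Hx; apply in_seq in Hx; lia.
Qed.

Lemma dn_div n : forall k, (0 < k)%nat -> (k <= n)%nat -> Nat.divide k (dn n).
Proof.
  intros k H1 H2; unfold dn; apply (proj2 (fold_lcm_div _ _)); apply in_seq; lia.
Qed.
Open Scope R_scope.

Lemma fnz n r : INR (fact n) ^ r <> 0.
Proof. apply pow_nonzero, INR_fact_neq_0. Qed.

Lemma R1_good i j n r : (i <= n)%nat -> (j <= n)%nat -> (n <= r*n + j)%nat ->
  exists w, Good (INR (dn n)) (RatR1 i j n r) (IZR w).
Proof.
  intros Hi Hj Hn. set (m := (r*n + j - n)%nat).
  destruct (E1' n (dn n) r m (r*n+i) (dn_pos n) (dn_div n)) as [w Hw]; [unfold m; lia|unfold m; lia|].
  exists (Z.of_nat w).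
  set (K1 := INR (fact (r*n)) / (INR (fact n) ^ r * INR (fact m))).
  apply Good_eqw with (K1 * INR (gprod (r*n+i) m (dn n))).
  - apply Good_ext_all with (fun x => K1 * falling (INR (r*n+i) + IZR 1 * x) m).
    + apply Good_scal, Good_falling; [left; reflexivity|unfold m; lia].
    + intros x; unfold RatR1.
      assert (Zeq : ((Z.of_nat r - 1) * Z.of_nat n + Z.of_nat j)%Z = Z.of_nat m).
      { unfold m; rewrite Nat2Z.inj_sub by lia; rewrite Nat2Z.inj_add, Nat2Z.inj_mul; ring. }
      rewrite Zeq, gbinom_nat; unfold K1; change (IZR 1) with 1; rewrite Rmult_1_l.
      field; split; [apply INR_fact_neq_0|apply fnz].
  - apply (f_equal INR) in Hw; rewrite !mult_INR, pow_INR in Hw.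
    rewrite <- INR_IZR_INZ; unfold K1.
    transitivity (INR (fact (r * n)) * INR (gprod (r * n + i) m (dn n)) / (INR (fact n) ^ r * INR (fact m))).
    + field; split; [apply INR_fact_neq_0|apply fnz].
    + rewrite Hw; field; split; [apply INR_fact_neq_0|apply fnz].
Qed.

Lemma poch_split a i j x : (i <= j)%nat ->
  poch (1 - x) (a + j + 1) = poch (1 - x) a * falling (INR (a + j + 1) - x) (i + 1)
     * falling (INR a - x + INR j - INR i) (j - i).
Proof.
  intros Hij.
  replace (a + j + 1)%nat with (a + (j + 1))%nat at 1 by lia.
  rewrite poch_add, (poch_falling (1 - x + INR a) (j+1)).
  replace (1 - x + INR a + INR (j + 1) - 1) with (INR (a + j + 1) - x) by (rewrite !plus_INR; simpl; ring).
  replace (falling (INR (a + j + 1) - x) (j + 1)) with (falling (INR (a + j + 1) - x) ((i + 1) + (j - i)))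
    by (f_equal; lia).
  rewrite (falling_add _ (i+1) (j-i)).
  replace (INR (a + j + 1) - x - INR (i + 1)) with (INR a - x + INR j - INR i) by (rewrite !plus_INR; simpl; ring).
  ring.
Qed.

Lemma fall_split r n i j x : (i <= j)%nat -> (j <= n)%nat -> (n <= r*n + j)%nat ->
  falling (INR ((r+1)*n) - x + 1) (r*n+i+1) =
  falling (INR ((r+1)*n+1) + IZR (-1) * x) (n-j) * falling (INR (r*n+j+1) - x) (i+1)
   * falling (INR (r*n+j-i) + IZR (-1) * x) (r*n+j-n).
Proof.
  intros Hij Hjn Hn.
  replace (r*n+i+1)%nat with ((n-j) + ((i+1) + (r*n+j-n)))%nat by lia.
  rewrite !falling_add.
  change (IZR (-1)) with (-1).
  assert (E : INR ((r+1)*n) = INR (r*n) + INR n) by (rewrite Nat.mul_add_distr_r, Nat.mul_1_l, plus_INR; reflexivity).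
  replace (INR ((r + 1) * n) - x + 1) with (INR ((r + 1) * n + 1) + -1 * x) by (rewrite plus_INR; simpl; ring).
  replace (INR ((r + 1) * n + 1) + -1 * x - INR (n - j)) with (INR (r * n + j + 1) - x)
    by (rewrite !plus_INR, E, minus_INR by lia; simpl; ring).
  replace (INR (r * n + j + 1) - x - INR (i + 1)) with (INR (r * n + j - i) + -1 * x)
    by (rewrite minus_INR by lia; rewrite !plus_INR; simpl; ring).
  ring.
Qed.

Lemma R2_good i j n r : (i <= j)%nat -> (j <= n)%nat -> (n <= r*n + j)%nat ->
  exists w, Good (INR (dn n)) (RatR2 i j n r) (IZR w).
Proof.
  intros Hij Hjn Hn.
  destruct (E2' n (dn n) r i j (dn_pos n) (dn_div n) Hij Hjn Hn) as [w Hw].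
  exists (Z.of_nat w).
  set (G1 := gprod ((r+1)*n+1) (n-j) (dn n)) in *.
  set (G2 := gprod (r*n+j-i) (r*n+j-n) (dn n)) in *.
  set (K2 := INR (fact (r*n+j+1)) / (INR (fact n) ^ r * INR (fact (j-i)) * INR (fact (r*n+i+1)))).
  apply Good_eqw with (K2 * (INR G1 * INR G2)).
  - apply Good_ext with (fun x => K2 * (falling (INR ((r+1)*n+1) + IZR (-1) * x) (n-j)
                                   * falling (INR (r*n+j-i) + IZR (-1) * x) (r*n+j-n))).
    + apply Good_scal, Good_mult; apply Good_falling; try (right; reflexivity); lia.
    + exists (1/2); split; [lra|]. intros x Hx. apply Rabs_def2 in Hx.
      unfold RatR2.
      rewrite <- Nat2Z.inj_sub by exact Hij.
      rewrite !gbinom_nat, (poch_split (r*n) i j x Hij), (fall_split r n i j x Hij Hjn Hn).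
      assert (P1 : poch (1 - x) (r * n) <> 0) by (apply Rgt_not_eq, poch_pos; lra).
      assert (Fa : falling (INR (r * n + j + 1) - x) (i + 1) <> 0).
      { apply Rgt_not_eq, falling_pos. rewrite !plus_INR. simpl.
        assert (0 <= INR (r*n)) by apply pos_INR. assert (INR i <= INR j) by (apply le_INR; exact Hij). lra. }
      assert (Fb : falling (INR (r * n) - x + INR j - INR i) (j - i) <> 0).
      { apply Rgt_not_eq, falling_pos. rewrite minus_INR by exact Hij.
        assert (0 <= INR (r*n)) by apply pos_INR. lra. }
      unfold K2; field.
      repeat split; try apply INR_fact_neq_0; try apply fnz; assumption.
  - apply (f_equal INR) in Hw; rewrite !mult_INR, pow_INR in Hw.
    rewrite <- INR_IZR_INZ; unfold K2.
    assert (N1 := INR_fact_neq_0 (j-i)); assert (N2 := INR_fact_neq_0 (r*n+i+1)); assert (N3 := fnz n r).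
    transitivity (INR (fact (r * n + j + 1)) * INR G1 * INR G2 / (INR (fact n) ^ r * INR (fact (j - i)) * INR (fact (r * n + i + 1)))).
    + field; repeat split; assumption.
    + rewrite Hw; field; repeat split; assumption.
Qed.

Lemma R2_good0 i j n : (i <= j)%nat -> (j < n)%nat ->
  exists w, Good (INR (dn n)) (RatR2 i j n 0) (IZR w).
Proof.
  intros Hij Hjn.
  destruct (E3' n (dn n) (i+1) (n+1) (dn_pos n) (dn_div n)) as [w Hw]; [lia|lia|].
  exists (Z.of_nat w).
  set (G := gprod (n+1) (i+1) (dn n)) in *.
  set (K3 := INR (fact (j+1)) / (INR (fact (j-i)) * INR (fact (i+1)))).
  apply Good_eqw with (K3 * (INR G * / falling (INR (j+1)) (i+1))).
  - apply Good_ext with (fun x => K3 * (falling (INR (n+1) + IZR (-1) * x) (i+1)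
                                   * / falling (INR (j+1) - x) (i+1))).
    + apply Good_scal, Good_mult.
      * apply Good_falling; [right; reflexivity|lia].
      * apply Good_rfalling with n; [apply dn_pos|apply dn_div|lia|lia].
    + exists (1/2); split; [lra|]. intros x Hx. apply Rabs_def2 in Hx.
      unfold RatR2.
      rewrite <- Nat2Z.inj_sub by exact Hij.
      rewrite !gbinom_nat, (poch_split (0*n) i j x Hij).
      rewrite Nat.mul_0_l, !Nat.add_0_l, Nat.mul_1_l.
      change (poch (1 - x) 0) with 1. change (fact 0) with 1%nat. rewrite pow_O.
      replace (INR n - x + 1) with (INR (n + 1) + IZR (-1) * x) by (rewrite plus_INR; simpl; ring).
      assert (Fa : falling (INR (j + 1) - x) (i + 1) <> 0).
      { apply Rgt_not_eq, falling_pos. rewrite !plus_INR. simpl.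
        assert (INR i <= INR j) by (apply le_INR; exact Hij). lra. }
      assert (Fb : falling (INR 0 - x + INR j - INR i) (j - i) <> 0).
      { apply Rgt_not_eq, falling_pos. rewrite minus_INR by exact Hij. simpl. lra. }
      unfold K3; simpl INR; field.
      repeat split; try apply INR_fact_neq_0; assumption.
  - apply (f_equal INR) in Hw; rewrite mult_INR in Hw.
    rewrite <- INR_IZR_INZ; unfold K3.
    assert (Ff := falling_fact (j+1) (i+1) ltac:(lia)).
    replace (j + 1 - (i + 1))%nat with (j - i)%nat in Ff by lia.
    assert (Fp : falling (INR (j + 1)) (i + 1) <> 0).
    { apply Rgt_not_eq, falling_pos. rewrite !plus_INR. assert (INR i <= INR j) by (apply le_INR; exact Hij). simpl; lra. }
    rewrite Hw, <- Ff.
    field; repeat split; try apply INR_fact_neq_0; assumption.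
Qed.

Theorem mainTheorem16 (i j n r H : nat) :
  ((i <= n)%nat -> (j <= n)%nat ->
     exists z : Z,
       INR (dn n) ^ H * / INR (fact H) * Derive_n (RatR1 i j n r) H 0 = IZR z) /\
  ((i <= j)%nat -> (j <= n)%nat ->
     exists z : Z,
       INR (dn n) ^ H * / INR (fact H) * Derive_n (RatR2 i j n r) H 0 = IZR z).
Proof.
  split; intros Hi Hj.
  - destruct (le_lt_dec n (r*n + j)) as [Hn|Hn].
    + destruct (R1_good i j n r Hi Hj Hn) as [w G]; exact (Good_final _ _ _ G H).
    + assert (Hr : r = 0%nat) by (destruct r; [reflexivity|nia]). subst r.
      exists 0%Z.
      rewrite (Derive_n_ext (RatR1 i j n 0) (fun _ => 0)).
      * destruct H; [simpl; ring|rewrite Derive_n_const; ring].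
      * intros t; unfold RatR1; rewrite gbinom_neg by lia; ring.
  - destruct (le_lt_dec n (r*n + j)) as [Hn|Hn].
    + destruct (R2_good i j n r Hi Hj Hn) as [w G]; exact (Good_final _ _ _ G H).
    + assert (Hr : r = 0%nat) by (destruct r; [reflexivity|nia]). subst r.
      destruct (R2_good0 i j n Hi ltac:(lia)) as [w G]; exact (Good_final _ _ _ G H).
Qed.
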